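(* Let $n\ge 1$ and $\ln\hat q=[F_n(z_n)]^{-1}\ln z_n$. Then $$\vartheta(n)=\sum_{p\le n,\ p\text{ prime}}\ln p = 1_n^T\ln\hat q=\sum_{i=1}^n(\ln\hat q)_i.$$
   Context: $z_n=(1,\dots,n)^T$; logarithms of vectors are entry-wise; $1_n$ is the all-ones vector. For $1\le i\le n$, $e_{\bar i|n}\in\mathbb{R}^n$ has $k$-th entry $1$ if $i\mid k$, else $0$. For $2\le i\le n$, $f_{i|n}=\sum_{t=1}^{\lfloor \log_i n\rfloor} e_{\overline{i^t}|n}$, and $f_{1|n}=1_n$. $F_n(z_n)=[f_{1|n}\ \cdots\ f_{n|n}]\in\mathbb{R}^{n\times n}$, which is invertible. *)

(* Defs.v *)
From Stdlib Require Import Reals ZArith Znumtheory List Arith.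
Open Scope R_scope.

Fixpoint sum1 (n : nat) (f : nat -> R) : R :=
  match n with
  | O => 0
  | S m => sum1 m f + f (S m)
  end.

(* Entry k of e_{\bar i|n} (1-based): 1 if i | k, else 0. *)
Definition e_entry (i k : nat) : R :=
  if Nat.eqb (Nat.modulo k i) 0 then 1 else 0.

(* For i >= 2,
   f_{i|n} = sum_{t=1}^{floor(log_i n)} e_{\bar{i^t}|n}; the exponents
   t = 1 .. floor(log_i n) are exactly the t >= 1 with i^t <= n, and all
   of them satisfy t <= n, so the sum is taken over t in 1..n with i^t <= n. *)
Definition f_entry (n i k : nat) : R :=
  if Nat.eqb i 1 then 1
  else sum1 n (fun t => if Nat.leb (Nat.pow i t) n then e_entry (Nat.pow i t) k else 0).

(* F_n(z_n) as a matrix: entry in row k, column i (1-based) is (f_{i|n})_k. *)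
Definition Fmat (n : nat) (k i : nat) : R := f_entry n i k.

Definition theta (n : nat) : R :=
  sum1 n (fun p => if prime_dec (Z.of_nat p) then ln (INR p) else 0).

(* Main.v *)
Require Import Defs.
From Stdlib Require Import Reals ZArith Znumtheory List Arith Lia Lra.
From mathcomp Require ssreflect ssrbool ssrnat div prime eqtype ssrfun zify.
Open Scope R_scope.

Lemma sum1_ext n f g : (forall i, (1 <= i <= n)%nat -> f i = g i) -> sum1 n f = sum1 n g.
Proof.
  induction n; cbn [sum1]; intros H; [reflexivity|].
  rewrite IHn by (intros; apply H; lia). rewrite H by lia. reflexivity.
Qed.

Lemma sum1_plus n f g : sum1 n (fun i => f i + g i) = sum1 n f + sum1 n g.
Proof. induction n; cbn [sum1]; [lra|]. rewrite IHn; lra. Qed.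

Lemma sum1_zero n : sum1 n (fun _ => 0) = 0.
Proof. induction n; cbn [sum1]; [lra|]. rewrite IHn; lra. Qed.

Lemma sum1_single n p c : (1 <= p <= n)%nat ->
  sum1 n (fun i => if Nat.eqb i p then c else 0) = c.
Proof.
  induction n; intros H; [lia|]. cbn [sum1].
  destruct (Nat.eqb (S n) p) eqn:E.
  - apply Nat.eqb_eq in E. subst p.
    rewrite (sum1_ext n _ (fun _ => 0)); [rewrite sum1_zero; try rewrite Nat.eqb_refl; lra|].
    intros i Hi. destruct (Nat.eqb_spec i (S n)); [lia|reflexivity].
  - apply Nat.eqb_neq in E. rewrite IHn by lia. replace (Nat.eqb (S n) p) with false by (symmetry; apply Nat.eqb_neq; lia). lra.
Qed.

Lemma sum1_count n L : sum1 n (fun t => if Nat.leb t L then 1 else 0) = INR (Nat.min n L).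
Proof.
  induction n; cbn [sum1]; [reflexivity|]. rewrite IHn.
  destruct (Nat.leb_spec (S n) L).
  - rewrite Nat.min_l by lia. rewrite Nat.min_l by lia. rewrite S_INR. lra.
  - rewrite Nat.min_r by lia. rewrite Nat.min_r by lia. lra.
Qed.

Lemma sum1_trunc n k g : (k <= n)%nat -> (forall i, (k < i <= n)%nat -> g i = 0) ->
  sum1 n g = sum1 k g.
Proof.
  induction n; intros Hk H.
  - replace k with 0%nat by lia. reflexivity.
  - destruct (Nat.eq_dec k (S n)); [subst; reflexivity|].
    cbn [sum1]. rewrite IHn by (try lia; intros; apply H; lia). rewrite H by lia. lra.
Qed.

Lemma mod_pos_ne k d : (1 <= k < d)%nat -> Nat.eqb (k mod d) 0 = false.
Proof. intros H. rewrite Nat.mod_small by lia. apply Nat.eqb_neq; lia. Qed.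

Lemma pow_ge i t : (2 <= i)%nat -> (1 <= t)%nat -> (i <= Nat.pow i t)%nat.
Proof.
  intros Hi Ht. destruct t; [lia|]. simpl.
  pose proof (Nat.pow_nonzero i t ltac:(lia)).
  nia.
Qed.

Lemma pow_gt2 i t : (2 <= i)%nat -> (2 <= t)%nat -> (i < Nat.pow i t)%nat.
Proof.
  intros Hi Ht. destruct t as [|[|t]]; try lia. simpl.
  pose proof (Nat.pow_nonzero i t ltac:(lia)). nia.
Qed.

Lemma F_upper n i k : (1 <= k)%nat -> (k < i)%nat -> f_entry n i k = 0.
Proof.
  intros Hk Hi. unfold f_entry. destruct (Nat.eqb_spec i 1); [lia|].
  rewrite (sum1_ext n _ (fun _ => 0)); [apply sum1_zero|].
  intros t Ht. destruct (Nat.leb (Nat.pow i t) n); [|reflexivity].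
  unfold e_entry. rewrite mod_pos_ne; [reflexivity|].
  pose proof (pow_ge i t ltac:(lia) ltac:(lia)). lia.
Qed.

Lemma F_diag n k : (1 <= k <= n)%nat -> f_entry n k k = 1.
Proof.
  intros Hk. unfold f_entry. destruct (Nat.eqb_spec k 1); [reflexivity|].
  rewrite (sum1_ext n _ (fun t => if Nat.eqb t 1 then 1 else 0)); [apply sum1_single; lia|].
  intros t Ht. destruct (Nat.eqb_spec t 1).
  - subst. rewrite Nat.pow_1_r. destruct (Nat.leb_spec k n); [|lia].
    unfold e_entry. rewrite Nat.mod_same by lia. reflexivity.
  - destruct (Nat.leb (Nat.pow k t) n); [|reflexivity].
    unfold e_entry. rewrite mod_pos_ne; [reflexivity|].
    pose proof (pow_gt2 k t ltac:(lia) ltac:(lia)). lia.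
Qed.

Module MC.
Local Close Scope R_scope. Local Open Scope nat_scope.
Import ssreflect ssrbool ssrnat div prime eqtype ssrfun zify.

Lemma modE (k d : nat) : (lt 0 (d)) -> Nat.eqb (Nat.modulo k d) 0 = (d %| k).
Proof.
  move=> Hd. apply/idP/idP.
  - move/Nat.eqb_spec => /Nat.Private_NLcmProp.mod_divide H.
    have [z Hz] := H ltac:(lia). apply/dvdnP. by exists z.
  - move/dvdnP=> [z Hz]. apply/Nat.eqb_spec. apply Nat.Private_NLcmProp.mod_divide; [lia|].
    by exists z.
Qed.

Lemma prime_ZtoN i : Znumtheory.prime (Z.of_nat i) -> prime i.
Proof.
  move/prime_alt=> [H1 H2]. apply/primeP. split; first lia.
  move=> d /dvdnP [c Hc].
  have Hi : (lt 0 (i)) by lia.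
  have Hd : (lt 0 (d)) by (destruct d; lia).
  have Hdi : (le (d) (i)) by (destruct c; lia).
  case: (Nat.eq_dec d 1) => [->//|Hd1].
  case: (Nat.eq_dec d i) => [->|Hdi']; first by rewrite eqxx orbT.
  exfalso. apply: (H2 (Z.of_nat d)); first lia.
  exists (Z.of_nat c). rewrite Hc. lia.
Qed.

Lemma prime_NtoZ i : prime i -> Znumtheory.prime (Z.of_nat i).
Proof.
  move/primeP=> [H1 H2]. apply/prime_alt. split; first lia.
  move=> m Hm [c Hc].
  have Hc0 : (0 <= c)%Z by nia.
  have := H2 (Z.to_nat m). rewrite (_ : Z.to_nat m %| i); last first.
    apply/dvdnP. exists (Z.to_nat c). lia.
  move=> /(_ isT) /orP [/eqP|/eqP]; lia.
Qed.

Lemma F_log (n i k : nat) : prime i -> (le 1 k /\ le k n) -> f_entry n i k = INR (logn i k).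
Proof.
  move=> Hp Hk. have Hi2 : (1 < i) by apply prime_gt1.
  have HL : (le (logn i k) (n)).
    have := ltn_expl (logn i k) Hi2.
    have : i ^ logn i k <= k.
      apply: dvdn_leq; first by lia.
      by rewrite pfactor_dvdn // ; lia.
    lia.
  rewrite /f_entry. case: (Nat.eqb_spec i 1) => [?|_]; first lia.
  rewrite (sum1_ext n _ (fun t => if Nat.leb t (logn i k) then 1%R else 0%R)).
    rewrite sum1_count. f_equal. lia.
  move=> t Ht. rewrite /e_entry.
  have Hpow : Nat.pow i t = i ^ t by elim: (t) => [|t0 IH] //; rewrite expnS -IH.
  
  rewrite Hpow.
  have Hpos : (lt 0 (i ^ t)) by (have := expn_gt0 i t; rewrite (ltnW Hi2); lia).
  rewrite modE // pfactor_dvdn //; last by lia.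
  case: (Nat.leb_spec t (logn i k)) => Ht2.
  - have -> : (t <= logn i k) = true by lia.
    have : i ^ t <= k.
      apply: dvdn_leq; first by lia. rewrite pfactor_dvdn //; lia.
    move=> H. have -> : Nat.leb (i ^ t) n = true by (apply Nat.leb_le; lia). done.
  - have -> : (t <= logn i k) = false by lia.
    by case: (Nat.leb (i ^ t) n).
Qed.


Definition qstar (i : nat) : R := if prime_dec (Z.of_nat i) then ln (INR i) else 0%R.

Lemma FQ (n k i : nat) : (le 1 k /\ le k n) ->
  (Fmat n k i * qstar i = INR (logn i k) * qstar i)%R.
Proof.
  move=> Hk. rewrite /qstar. case: prime_dec => H; last by rewrite !Rmult_0_r.
  by rewrite /Fmat (F_log n i k (prime_ZtoN _ H) Hk).
Qed.

Lemma INR_addn a b : INR (a + b) = (INR a + INR b)%R.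
Proof. exact: plus_INR. Qed.

Lemma sumB (n k : nat) : (le 1 k /\ le k n) ->
  sum1 n (fun i => INR (logn i k) * qstar i)%R = ln (INR k).
Proof.
  elim/lt_wf_ind: k => k IH Hk.
  case: (Nat.eq_dec k 1) => [->|Hk1].
    rewrite (sum1_ext n _ (fun _ => 0%R)); first by rewrite sum1_zero ln_1.
    move=> i _. by rewrite logn1 Rmult_0_l.
  have Hk2 : 1 < k by lia.
  set p := pdiv k. have Pp := pdiv_prime Hk2.
  have Hp1 := prime_gt1 Pp.
  have Hpk : p <= k by apply: pdiv_leq; lia.
  set m := k %/ p.
  have Hkm : k = m * p by rewrite divnK // pdiv_dvd.
  have Hm0 : 0 < m by (rewrite Hkm in Hk2; case: (m) Hk2 => //; lia).
  have Hmk : lt m k by move: Hkm Hm0 Hp1; clearbody m; nia.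
  rewrite (sum1_ext n _ (fun i => (INR (logn i m) * qstar i + if Nat.eqb i p then ln (INR p) else 0)%R)).
    rewrite sum1_plus IH //; last by lia.
    rewrite sum1_single; last by lia.
    rewrite (_ : INR k = (INR m * INR p)%R); last by rewrite -mult_INR {1}Hkm.
    rewrite ln_mult; first lra.
    - apply lt_0_INR; lia.
    - apply lt_0_INR; lia.
  move=> i Hi. rewrite {1}Hkm lognM //; last by lia.
  rewrite INR_addn Rmult_plus_distr_r (logn_prime i Pp).
  case: (Nat.eqb_spec i p) => [->|Hip].
    rewrite eqxx /= Rmult_1_l /qstar; case: prime_dec => // H; case: H; apply: prime_NtoZ; exact: Pp.
  have -> : (i == pdiv k) = false by apply/negbTE/eqP.
  by rewrite /= Rmult_0_l.
Qed.

Lemma main' (n : nat) (Hn : le 1 n) (lnq : nat -> R)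
  (Hq : forall k : nat, (le 1 k /\ le k n) ->
          sum1 n (fun i => Fmat n k i * lnq i)%R = ln (INR k)) :
  theta n = sum1 n lnq.
Proof.
  have key : forall k, (le 1 k /\ le k n) -> lnq k = qstar k.
    elim/lt_wf_ind => k IH Hk.
    have split : forall x : nat -> R, sum1 n (fun i => Fmat n k i * x i)%R
        = (sum1 (k.-1) (fun i => Fmat n k i * x i) + x k)%R.
      move=> x. rewrite (sum1_trunc n k); last first.
        - move=> i Hi. rewrite /Fmat F_upper; [by rewrite Rmult_0_l|lia|lia].
        - lia.
      have -> : k = (k.-1).+1 by lia.
      cbn [sum1]. rewrite -pred_Sn /Fmat F_diag; first lra. lia.
    have E1 := Hq k Hk. rewrite split in E1.
    have E2 := sumB n k Hk.
    rewrite (sum1_ext n _ (fun i => Fmat n k i * qstar i)%R) in E2; last first.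
      move=> i Hi. by rewrite FQ.
    rewrite split in E2.
    rewrite (sum1_ext _ _ (fun i => Fmat n k i * qstar i)%R) in E1; first lra.
    move=> i Hi. rewrite IH //; lia.
  rewrite /theta. apply: sum1_ext => i Hi. rewrite (key i Hi). rewrite /qstar; by case: prime_dec.
Qed.

End MC.


Theorem mainTheorem9 (n : nat) (Hn : (1 <= n)%nat) (lnq : nat -> R)
  (Hq : forall k : nat, (1 <= k <= n)%nat ->
          sum1 n (fun i => Fmat n k i * lnq i) = ln (INR k)) :
  theta n = sum1 n lnq.
Proof. exact (MC.main' n Hn lnq Hq). Qed.
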